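(* Let $f$ be a real function differentiable on the interval $a\le x\le b$, and let $m,k\in\mathbb{R}$. Then the area of the surface of revolution in $\mathbb{R}^3$ obtained by revolving the graph of $y=f(x)$, $a\le x\le b$, about the line $y=m\,x+k$ is given by $$2\pi\int_a^b \bigl|f(x)-m\,x-k\bigr|\,\sqrt{\frac{1+\bigl[f'(x)\bigr]^2}{1+m^2}}\,dx.$$
   Context: The plane $\mathbb{R}^2$ is regarded as sitting inside $\mathbb{R}^3$, and the surface of revolution is the surface swept out when the graph is rotated through a full turn about the given line (viewed as an axis in $\mathbb{R}^3$). *)

(* Defs.v *)
From Stdlib Require Import Reals.
From Coquelicot Require Import Coquelicot.
Open Scope R_scope.

Definition v3 : Type := (R * R * R)%type.
Definition mk3 (x y z : R) : v3 := (x, y, z).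
Definition v_x (v : v3) : R := fst (fst v).
Definition v_y (v : v3) : R := snd (fst v).
Definition v_z (v : v3) : R := snd v.

Definition vadd (p q : v3) : v3 := mk3 (v_x p + v_x q) (v_y p + v_y q) (v_z p + v_z q).
Definition vsub (p q : v3) : v3 := mk3 (v_x p - v_x q) (v_y p - v_y q) (v_z p - v_z q).
Definition vscale (c : R) (p : v3) : v3 := mk3 (c * v_x p) (c * v_y p) (c * v_z p).
Definition vdot (p q : v3) : R := v_x p * v_x q + v_y p * v_y q + v_z p * v_z q.
Definition vcross (p q : v3) : v3 :=
  mk3 (v_y p * v_z q - v_z p * v_y q)
      (v_z p * v_x q - v_x p * v_z q)
      (v_x p * v_y q - v_y p * v_x q).
Definition vnorm (p : v3) : R := sqrt (vdot p p).

(* Rotation of the point p by angle t about the axis through c with unit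
   direction u (Rodrigues' formula). *)
Definition rotate_about (c u : v3) (t : R) (p : v3) : v3 :=
  let q := vsub p c in
  vadd c (vadd (vscale (cos t) q)
               (vadd (vscale (sin t) (vcross u q))
                     (vscale ((1 - cos t) * vdot u q) u))).

(* The line y = m x + k of the plane R^2 = {z = 0} in R^3, as an axis:
   base point (0,k,0), unit direction (1,m,0)/sqrt(1+m^2). *)
Definition line_point (m k : R) : v3 := mk3 0 k 0.
Definition line_dir (m k : R) : v3 := vscale (/ sqrt (1 + m ^ 2)) (mk3 1 m 0).

Definition revolution_surface (f : R -> R) (m k : R) (x t : R) : v3 :=
  rotate_about (line_point m k) (line_dir m k) t (mk3 x (f x) 0).

Definition derive3 (g : R -> v3) (s : R) : v3 :=
  mk3 (Derive (fun r => v_x (g r)) s)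
      (Derive (fun r => v_y (g r)) s)
      (Derive (fun r => v_z (g r)) s).

Definition param_surface_area (S : R -> R -> v3) (a b al be : R) : R :=
  RInt (fun x => RInt (fun t =>
          vnorm (vcross (derive3 (fun s => S s t) x) (derive3 (fun r => S x r) t)))
        al be) a b.

Definition differentiable_on_closed (f : R -> R) (a b : R) : Prop :=
  forall x, a <= x <= b ->
    exists l : R,
      filterlim (fun h => (f (x + h) - f x) / h)
        (within (fun h => h <> 0 /\ a <= x + h <= b) (locally 0))
        (locally l).

(* Main.v *)
Require Import Defs.
From Stdlib Require Import Reals Lra Classical.
From Coquelicot Require Import Coquelicot.
Open Scope R_scope.

Lemma key (s y m k fp c sn i : R) :
  sn^2 + c^2 = 1 -> i^2 * (1 + m^2) = 1 ->
  let ax := c + (1-c)*(i + i*m*fp)*i in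
  let ay := c*fp + (1-c)*(i + i*m*fp)*(i*m) in
  let az := sn*(i*fp - i*m) in
  let bx := -(sn*s) + sn*(i*s + i*m*(y - k))*i in
  let by_ := -(sn*(y-k)) + sn*(i*s + i*m*(y-k))*(i*m) in
  let bz := c*(i*(y-k) - i*m*s) in
  (ay*bz - az*by_)*(ay*bz - az*by_) + (az*bx - ax*bz)*(az*bx - ax*bz) + (ax*by_ - ay*bx)*(ax*by_ - ay*bx)
   = (y - m*s - k)^2 * ((1+fp^2) * i^2).
Proof.
  intros H1 H2 ax ay az bx by_ bz.
  assert (H1' : sn^2 + c^2 - 1 = 0) by lra.
  assert (H2' : i^2*m^2 + i^2 - 1 = 0) by lra.
  assert (Cx : ay*bz - az*by_ = (y - m*s - k) * i^3 * ((fp - m) + (1+m*fp)*c*m)).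
  { assert (E : ay*bz - az*by_ - ((y - m*s - k) * i^3 * ((fp - m) + (1+m*fp)*c*m)) = (sn^2 + c^2 - 1) * ((1)*y*fp*i + (-1)*k*fp*i + (-1)*s*m*fp*i^3 + (-1)*y*m^2*fp*i^3 + (1)*m^2*k*fp*i^3 + (-1)*y*m*i + (1)*m*k*i + (1)*s*m^2*i^3 + (1)*y*m^3*i^3 + (-1)*m^3*k*i^3) + (i^2*m^2 + i^2 - 1) * ((1)*s*m*fp*c^2*i + (-1)*y*fp*i + (1)*k*fp*i + (-1)*y*m*c^2*i + (1)*y*m*i + (1)*m*k*c^2*i + (-1)*m*k*i)) by (unfold ax, ay, az, bx, by_, bz; ring).
  rewrite H1', H2', !Rmult_0_l, Rplus_0_l in E. lra. }
  assert (Cy : az*bx - ax*bz = (y - m*s - k) * i^3 * ((fp - m)*m - (1+m*fp)*c)).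
  { assert (E : az*bx - ax*bz - ((y - m*s - k) * i^3 * ((fp - m)*m - (1+m*fp)*c)) = (sn^2 + c^2 - 1) * ((-1)*s*fp*i + (1)*s*fp*i^3 + (1)*y*m*fp*i^3 + (-1)*m*k*fp*i^3 + (1)*s*m*i + (-1)*s*m*i^3 + (-1)*y*m^2*i^3 + (1)*m^2*k*i^3) + (i^2*m^2 + i^2 - 1) * ((-1)*s*fp*c^2*i + (1)*s*fp*i + (-1)*s*m*i + (1)*y*c^2*i + (-1)*k*c^2*i)) by (unfold ax, ay, az, bx, by_, bz; ring).
  rewrite H1', H2', !Rmult_0_l, Rplus_0_l in E. lra. }
  assert (Cz : ax*by_ - ay*bx = -1 * (y - m*s - k) * i^2 * (1+m*fp) * sn).
  { assert (E : ax*by_ - ay*bx - (-1 * (y - m*s - k) * i^2 * (1+m*fp) * sn) = (sn^2 + c^2 - 1) * (0) + (i^2*m^2 + i^2 - 1) * ((1)*y*c*sn + (-1)*k*c*sn + (-1)*s*fp*c*sn)) by (unfold ax, ay, az, bx, by_, bz; ring).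
  rewrite H1', H2', !Rmult_0_l, Rplus_0_l in E. lra. }
  rewrite Cx, Cy, Cz.
  assert (E : ((y - m*s - k) * i^3 * ((fp - m) + (1+m*fp)*c*m))*((y - m*s - k) * i^3 * ((fp - m) + (1+m*fp)*c*m)) + ((y - m*s - k) * i^3 * ((fp - m)*m - (1+m*fp)*c))*((y - m*s - k) * i^3 * ((fp - m)*m - (1+m*fp)*c)) + (-1 * (y - m*s - k) * i^2 * (1+m*fp) * sn)*(-1 * (y - m*s - k) * i^2 * (1+m*fp) * sn) - ((y - m*s - k)^2 * ((1+fp^2) * i^2)) = (sn^2 + c^2 - 1) * ((1)*y^2*m^2*fp^2*i^4 + (2)*y^2*m*fp*i^4 + (-2)*s*y*m^3*fp^2*i^4 + (-4)*s*y*m^2*fp*i^4 + (-2)*y*m^2*k*fp^2*i^4 + (-4)*y*m*k*fp*i^4 + (1)*y^2*i^4 + (-2)*s*y*m*i^4 + (-2)*y*k*i^4 + (1)*s^2*m^4*fp^2*i^4 + (2)*s^2*m^3*fp*i^4 + (2)*s*m^3*k*fp^2*i^4 + (4)*s*m^2*k*fp*i^4 + (1)*s^2*m^2*i^4 + (2)*s*m*k*i^4 + (1)*m^2*k^2*fp^2*i^4 + (2)*m*k^2*fp*i^4 + (1)*k^2*i^4) + (i^2*m^2 + i^2 - 1) * ((1)*y^2*m^2*fp^2*c^2*i^4 + (2)*y^2*m*fp*c^2*i^4 + (-2)*s*y*m^3*fp^2*c^2*i^4 + (-4)*s*y*m^2*fp*c^2*i^4 + (-2)*y*m^2*k*fp^2*c^2*i^4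 + (-4)*y*m*k*fp*c^2*i^4 + (1)*y^2*c^2*i^4 + (-2)*s*y*m*c^2*i^4 + (-2)*y*k*c^2*i^4 + (1)*s^2*m^4*fp^2*c^2*i^4 + (2)*s^2*m^3*fp*c^2*i^4 + (2)*s*m^3*k*fp^2*c^2*i^4 + (4)*s*m^2*k*fp*c^2*i^4 + (1)*s^2*m^2*c^2*i^4 + (2)*s*m*k*c^2*i^4 + (1)*m^2*k^2*fp^2*c^2*i^4 + (2)*m*k^2*fp*c^2*i^4 + (1)*k^2*c^2*i^4 + (1)*y^2*fp^2*i^4 + (-2)*y^2*m*fp*i^4 + (-2)*s*y*m*fp^2*i^4 + (4)*s*y*m^2*fp*i^4 + (-2)*y*k*fp^2*i^4 + (4)*y*m*k*fp*i^4 + (1)*y^2*m^2*i^4 + (-2)*s*y*m^3*i^4 + (-2)*y*m^2*k*i^4 + (1)*s^2*m^2*fp^2*i^4 + (-2)*s^2*m^3*fp*i^4 + (2)*s*m*k*fp^2*i^4 + (-4)*s*m^2*k*fp*i^4 + (1)*s^2*m^4*i^4 + (2)*s*m^3*k*i^4 + (1)*k^2*fp^2*i^4 + (-2)*m*k^2*fp*i^4 + (1)*m^2*k^2*i^4 + (1)*y^2*fp^2*i^2 + (-2)*s*y*m*fp^2*i^2 + (-2)*y*k*fp^2*i^2 + (1)*s^2*m^2*fp^2*i^2 + (2)*s*m*k*fp^2*i^2 + (1)*k^2*fp^2*i^2 + (1)*y^2*i^2 + (-2)*s*y*m*i^2 + (-2)*y*k*i^2 + (1)*s^2*m^2*i^2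 + (2)*s*m*k*i^2 + (1)*k^2*i^2)) by ring.
  rewrite H1', H2', !Rmult_0_l, Rplus_0_l in E. lra.
Qed.
Section X.
Variables (f : R -> R) (m k : R).
Let i := / sqrt (1 + m ^ 2).
Lemma SX s t : v_x (revolution_surface f m k s t) = cos t * s + (1 - cos t)*(i*s + i*m*(f s - k))*i.
Proof. unfold revolution_surface, rotate_about, line_point, line_dir, vadd, vsub, vscale, vdot, vcross, mk3, v_x, v_y, v_z; cbn [fst snd]. unfold i. ring. Qed.
Lemma SY s t : v_y (revolution_surface f m k s t) = k + cos t*(f s - k) + (1-cos t)*(i*s + i*m*(f s - k))*(i*m).
Proof. unfold revolution_surface, rotate_about, line_point, line_dir, vadd, vsub, vscale, vdot, vcross, mk3, v_x, v_y, v_z; cbn [fst snd]. unfold i. ring. Qed.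
Lemma SZ s t : v_z (revolution_surface f m k s t) = sin t*(i*(f s - k) - i*m*s).
Proof. unfold revolution_surface, rotate_about, line_point, line_dir, vadd, vsub, vscale, vdot, vcross, mk3, v_x, v_y, v_z; cbn [fst snd]. unfold i. ring. Qed.

Lemma DX x t : ex_derive f x ->
  Derive (fun s => v_x (revolution_surface f m k s t)) x = cos t + (1-cos t)*(i + i*m*Derive f x)*i.
Proof.
intros Hf. rewrite (Derive_ext _ _ _ (fun s => SX s t)). apply is_derive_unique.
auto_derive. auto. change (Derive (fun x0 : R => f x0) x) with (Derive f x). ring.
Qed.
Lemma DY x t : ex_derive f x ->
  Derive (fun s => v_y (revolution_surface f m k s t)) x = cos t * Derive f x + (1-cos t)*(i + i*m*Derive f x)*(i*m).
Proof.
intros Hf. rewrite (Derive_ext _ _ _ (fun s => SY s t)). apply is_derive_unique.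
auto_derive. auto. change (Derive (fun x0 : R => f x0) x) with (Derive f x). ring.
Qed.
Lemma DZ x t : ex_derive f x ->
  Derive (fun s => v_z (revolution_surface f m k s t)) x = sin t * (i * Derive f x - i*m).
Proof.
intros Hf. rewrite (Derive_ext _ _ _ (fun s => SZ s t)). apply is_derive_unique.
auto_derive. auto. change (Derive (fun x0 : R => f x0) x) with (Derive f x). ring.
Qed.
Lemma TX x t :
  Derive (fun r => v_x (revolution_surface f m k x r)) t = -(sin t*x) + sin t*(i*x + i*m*(f x - k))*i.
Proof.
rewrite (Derive_ext _ _ _ (fun r => SX x r)). apply is_derive_unique.
auto_derive. auto. ring.
Qed.
Lemma TY x t :
  Derive (fun r => v_y (revolution_surface f m k x r)) t = -(sin t*(f x-k)) + sin t*(i*x + i*m*(f x-k))*(i*m).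
Proof.
rewrite (Derive_ext _ _ _ (fun r => SY x r)). apply is_derive_unique.
auto_derive. auto. ring.
Qed.
Lemma TZ x t :
  Derive (fun r => v_z (revolution_surface f m k x r)) t = cos t*(i*(f x-k) - i*m*x).
Proof.
rewrite (Derive_ext _ _ _ (fun r => SZ x r)). apply is_derive_unique.
auto_derive. auto. ring.
Qed.
End X.

Lemma integrand (f : R -> R) (m k x t : R) : ex_derive f x ->
  vnorm (vcross (derive3 (fun s => revolution_surface f m k s t) x)
                (derive3 (fun r => revolution_surface f m k x r) t))
  = Rabs (f x - m * x - k) * sqrt ((1 + (Derive f x) ^ 2) / (1 + m ^ 2)).
Proof.
intros Hf. unfold derive3.
rewrite DX, DY, DZ, TX, TY, TZ by exact Hf.
set (i := / sqrt (1 + m ^ 2)).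
assert (Hm : 0 < 1 + m^2) by nra.
assert (Hi : i^2 = / (1 + m^2)).
{ unfold i. rewrite pow_inv, <- Rsqr_pow2, Rsqr_sqrt by lra. reflexivity. }
assert (H1 : sin t ^2 + cos t ^2 = 1) by (rewrite <- (sin2_cos2 t); unfold Rsqr; ring).
assert (H2 : i^2 * (1 + m^2) = 1) by (rewrite Hi; field; lra).
assert (K := key x (f x) m k (Derive f x) (cos t) (sin t) i H1 H2). cbv zeta in K.
unfold vnorm, vdot, vcross, mk3, v_x, v_y, v_z; cbn [fst snd].
rewrite K. rewrite Hi.
rewrite sqrt_mult_alt.
- f_equal. rewrite <- sqrt_Rsqr_abs. unfold Rsqr. f_equal. ring.
- apply pow2_ge_0.
Qed.
Lemma RInt_nex (h : R -> R) a b : ~ ex_RInt h a b -> RInt h a b = 0.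
Proof.
intros H. unfold RInt, iota, lim. simpl. unfold R_complete_lim.
rewrite (is_lub_Rbar_unique _ p_infty); [reflexivity|].
split.
- intros x _. exact I.
- intros l Hl. destruct l as [r| |]; simpl; auto.
  + specialize (Hl (r+1)). simpl in Hl. exfalso.
    assert (r + 1 <= r). { apply Hl. intros y Hy. exfalso; apply H; exists y; exact Hy. }
    lra.
  + specialize (Hl 0). simpl in Hl. apply Hl. intros y Hy. exfalso; apply H; exists y; exact Hy.
Qed.
Lemma RInt_scal_gen (h : R -> R) a b c : RInt (fun x => c * h x) a b = c * RInt h a b.
Proof.
destruct (Req_dec c 0) as [->|Hc].
{ rewrite Rmult_0_l. rewrite (RInt_ext _ (fun _ => 0)).
  - rewrite RInt_const. unfold scal; simpl; unfold mult; simpl; ring.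
  - intros; apply Rmult_0_l. }
destruct (classic (ex_RInt h a b)) as [E|E].
- apply (RInt_scal h a b c E).
- rewrite (RInt_nex h) by exact E. rewrite RInt_nex. simpl; rewrite Rmult_0_r; reflexivity.
  intros E'. apply E. apply (ex_RInt_ext (fun x => / c * (c * h x))).
  intros; simpl; field; auto. apply (ex_RInt_scal (fun x => c * h x)). exact E'.
Qed.
Lemma interior_deriv f a b x: differentiable_on_closed f a b -> a < x < b -> ex_derive f x.
Proof.
intros Hd Hx. destruct (Hd x ltac:(lra)) as [l Hl].
exists l. apply is_derive_Reals. intros eps Heps.
assert (Hb := Hl (ball l (mkposreal eps Heps)) (locally_ball _ _)).
destruct Hb as [del Hdel].
assert (Hpos : 0 < Rmin del (Rmin (x - a) (b - x))).
{ apply Rmin_pos; [apply cond_pos| apply Rmin_pos; lra]. }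
exists (mkposreal _ Hpos). intros h Hh0 Hh. simpl in Hh.
assert (H1 : Rabs h < del) by (eapply Rlt_le_trans; [exact Hh| apply Rmin_l]).
assert (H2 : Rabs h < Rmin (x - a) (b - x)) by (eapply Rlt_le_trans; [exact Hh| apply Rmin_r]).
assert (H3 := Rmin_l (x-a) (b-x)). assert (H4 := Rmin_r (x-a) (b-x)).
assert (Hab : a <= x + h <= b).
{ destruct (Rabs_def2 h _ H2). lra. }
specialize (Hdel h). 
assert (Hb0 : ball 0 del h).
{ unfold ball; simpl; unfold AbsRing_ball, abs, minus, plus, opp; simpl. rewrite Ropp_0, Rplus_0_r. exact H1. }
specialize (Hdel Hb0 (conj Hh0 Hab)).
unfold ball in Hdel; simpl in Hdel; unfold AbsRing_ball, abs, minus, plus, opp in Hdel; simpl in Hdel.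
exact Hdel.
Qed.

Theorem mainTheorem2 (f : R -> R) (a b m k : R) :
  a <= b ->
  differentiable_on_closed f a b ->
  param_surface_area (revolution_surface f m k) a b 0 (2 * PI) =
  2 * PI * RInt (fun x => Rabs (f x - m * x - k) *
                          sqrt ((1 + (Derive f x) ^ 2) / (1 + m ^ 2))) a b.
Proof.
intros Hab Hd. unfold param_surface_area.
rewrite (RInt_ext _ (fun x => 2 * PI * (Rabs (f x - m * x - k) *
                          sqrt ((1 + (Derive f x) ^ 2) / (1 + m ^ 2))))).
- apply RInt_scal_gen.
- intros x Hx. rewrite Rmin_left, Rmax_right in Hx by lra.
  assert (Hf := interior_deriv f a b x Hd Hx).
  rewrite (RInt_ext _ (fun _ => Rabs (f x - m * x - k) *
                          sqrt ((1 + (Derive f x) ^ 2) / (1 + m ^ 2)))).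
  + rewrite RInt_const. unfold scal; simpl; unfold mult; simpl. ring.
  + intros t _. apply integrand; exact Hf.
Qed.
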